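(* Let $n\ge 2$, let $\Omega$ be a compact subset of $\mathbb{R}^n$, let $v\in S^{n-1}$ and $b\in\mathbb{R}$. Then $b\ge l_{\Omega}(v)$ if and only if for every $x\in \Omega^+_{v,b}$ the closed line segment $\overline{xx'}$ joining $x$ and $x'=\mathrm{R}_{v,b}(x)$ is contained in $\Omega$.
   Context: $S^{n-1}$ is the unit sphere in $\mathbb{R}^n$. For $X\subset\mathbb{R}^n$, $v\in S^{n-1}$ and $b\in\mathbb{R}$, put $X^+_{v,b}=X\cap\{x\in\mathbb{R}^n : x\cdot v>b\}$, and let $\mathrm{R}_{v,b}$ be the reflection of $\mathbb{R}^n$ in the hyperplane $\{x : x\cdot v=b\}$. For a bounded $X\subset\mathbb{R}^n$, the level of the maximal cap in direction $v$ is $l_X(v)=\inf\{a : \mathrm{R}_{v,c}(X^+_{v,c})\subset X \text{ for every } c\ge a\}$. For $x,y\in\mathbb{R}^n$, $\overline{xy}$ denotes the closed line segment joining $x$ and $y$. *)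

(* Defs.v *)
From HB Require Import structures.
From mathcomp Require Import all_boot all_order all_algebra.
From mathcomp Require Import all_classical all_reals all_analysis.
Set Implicit Arguments. Unset Strict Implicit. Unset Printing Implicit Defensive.
Import Order.TTheory GRing.Theory Num.Theory.
Import numFieldNormedType.Exports.
Local Open Scope classical_set_scope.
Local Open Scope ring_scope.

Section Defs.
Variables (R : realType) (n : nat).

Definition dotp (x y : 'rV[R]_n) : R := \sum_(i < n) x ord0 i * y ord0 i.

Definition sphere : set 'rV[R]_n := [set v | dotp v v = 1].

Definition cap_plus (X : set 'rV[R]_n) (v : 'rV[R]_n) (b : R) : set 'rV[R]_n :=
  X `&` [set x | dotp x v > b].

(* reflection in the hyperplane {x . v = b} (v a unit vector) *)
Definition refl (v : 'rV[R]_n) (b : R) (x : 'rV[R]_n) : 'rV[R]_n :=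
  x - (2 * (dotp x v - b)) *: v.

Definition max_cap_level (X : set 'rV[R]_n) (v : 'rV[R]_n) : \bar R :=
  ereal_inf [set a%:E | a in
    [set a : R | forall c : R, a <= c -> refl v c @` cap_plus X v c `<=` X]].

Definition segment (x y : 'rV[R]_n) : set 'rV[R]_n :=
  [set (1 - t) *: x + t *: y | t in [set t : R | 0 <= t <= 1]].

End Defs.

(* Main.v *)
Require Import Defs.
From HB Require Import structures.
From mathcomp Require Import all_boot all_order all_algebra.
From mathcomp Require Import all_classical all_reals all_analysis.
From mathcomp Require Import ring lra.
Import Order.TTheory GRing.Theory Num.Theory.
Import numFieldNormedType.Exports.
Local Open Scope classical_set_scope.
Local Open Scope ring_scope.

Lemma segpt (R : realType) (n : nat) (x v : 'rV[R]_n) (k t : R) :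
  (1 - t) *: x + t *: (x - k *: v) = x - (t * k) *: v.
Proof.
by rewrite scalerDr scalerN scalerA scalerBl scale1r addrA subrK.
Qed.

Theorem lemma2p1 (R : realType) (n : nat) (Omega : set 'rV[R]_n)
    (v : 'rV[R]_n) (b : R) :
  (2 <= n)%N -> compact Omega -> sphere v ->
  ((max_cap_level Omega v <= b%:E)%E <->
   (forall x, cap_plus Omega v b x -> segment x (refl v b x) `<=` Omega)).
Proof.
move=> _ cO _; split.
- move=> Hl x [Ox xb] z [t /andP[t0 t1] <-].
  rewrite /refl segpt.
  set d := dotp x v in xb *.
  have G : forall s, 0 <= s < 1 -> Omega (x - (s * (2 * (d - b))) *: v).
    move=> s /andP[s0 s1].
    have [->|sn0] := eqVneq s 0; first by rewrite mul0r scale0r subr0.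
    have sp : 0 < s by rewrite lt0r sn0.
    pose c := d - s * (d - b).
    have bc : b < c.
      rewrite /c ltrBrDl -ltrBrDr. (* s*(d-b) < d - b *)
      by rewrite -[X in _ < X]mul1r ltr_pM2r ?subr_gt0.
    have bcE : (b%:E < c%:E)%E by rewrite lte_fin.
    have [y [a Aa <-] ay] := ereal_inf_lt (le_lt_trans Hl bcE).
    rewrite lte_fin in ay.
    have E : refl v c x = x - (s * (2 * (d - b))) *: v.
      rewrite /refl -/d /c; congr (_ - _ *: _); ring.
    rewrite -E; apply: (Aa c (ltW ay)); exists x => //; split => //.
    have := mulr_gt0 sp (_ : 0 < d - b); rewrite /= -/d /c subr_gt0; move=> h; have := h xb; lra.
  have [tl1|] := ltP t 1; first by apply: G; rewrite t0 tl1.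
  move=> t1'; have -> : t = 1 by apply/le_anti; rewrite t1 t1'.
  have clO : closed Omega by apply: compact_closed => //; exact: norm_hausdorff.
  pose u := fun m : nat => x - ((1 - harmonic m) * (2 * (d - b))) *: v.
  apply: (@closed_cvg _ _ \oo _ u _ clO); last first.
    rewrite /u.
    apply: cvgB; first exact: cvg_cst.
    apply: cvgZl.
    have -> : (1 : R) * (2 * (d - b)) = (1 - 0) * (2 * (d - b)) by rewrite subr0.
    apply: cvgMl; apply: cvgB; first exact: cvg_cst.
    exact: cvg_harmonic.
  near=> m; apply: G.
  rewrite subr_ge0 ltrBlDr ltrDl harmonic_gt0 andbT.
  by rewrite /= invf_le1 ?ler1n ?ltr0n.
  Unshelve. all: end_near.
- move=> H.
  apply: ereal_inf_lbound; exists b => //.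
  move=> c bc z [y [Oy yc] <-].
  have yc' : c < dotp y v := yc.
  have yb : b < dotp y v by apply: le_lt_trans bc yc'.
  have db : dotp y v - b != 0 by rewrite subr_eq0 gt_eqF.
  apply: (H y); first by split.
  exists ((dotp y v - c) / (dotp y v - b)).
    apply/andP; split.
      by apply: divr_ge0; rewrite subr_ge0 ltW.
    by rewrite ler_pdivrMr ?subr_gt0 // mul1r lerB.
  rewrite /refl segpt; congr (_ - _ *: _).
  by field.
Qed.
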